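(* Let $\Delta$ be a repository, $C\in\mathrm{dom}(\Delta)$ with $C:\Delta(C)\in\Delta$, $E_1,\ldots,E_m$ combinatory terms, $\tau\in\mathbb{T}_C$ and $k\in\mathbb{N}$. The following are equivalent: (1) $\Delta\vdash_k C\,E_1\cdots E_m:\tau$; (2) there exists a set of paths $P\subseteq\mathbb{P}_m\big(\bigcap\{S(\Delta(C))\mid\mathrm{level}(S)\le k,\ \mathrm{atoms}(S)\subseteq\mathrm{atoms}(\Delta)\cup\mathrm{atoms}(\tau)\}\big)$ such that (a) $\bigcap_{\pi\in P}\mathrm{tgt}_m(\pi)\le\tau$ and (b) $\Delta\vdash_k E_i:\bigcap_{\pi\in P}\mathrm{arg}_i(\pi)$ for $1\le i\le m$.
   Context: Types $\mathbb{T}_C\ni\tau ::= a\mid\alpha\mid\omega\mid\tau_1\to\tau_2\mid\tau_1\cap\tau_2\mid c(\tau)$ ($a$ constants, $\alpha$ type variables, $c$ unary constructors). Subtyping $\le$: least preorder with $\sigma\le\omega$; $\omega\le\omega\to\omega$; $\sigma\cap\tau\le\sigma$; $\sigma\cap\tau\le\tau$; $\sigma\le\tau_1,\sigma\le\tau_2\Rightarrow\sigma\le\tau_1\cap\tau_2$; $(\sigma\to\tau_1)\cap(\sigma\to\tau_2)\le\sigma\to\tau_1\cap\tau_2$; $\sigma_2\le\sigma_1,\tau_1\le\tau_2\Rightarrow\sigma_1\to\tau_1\le\sigma_2\to\tau_2$; $\tau_1\le\tau_2\Rightarrow c(\tau_1)\le c(\tau_2)$; $c(\tau_1)\cap c(\tau_2)\le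 c(\tau_1\cap\tau_2)$. Level: $0$ for $\omega,a,\alpha$; $\mathrm{level}(c(\tau))=1+\mathrm{level}(\tau)$; $\mathrm{level}(\sigma\to\tau)=1+\max(\mathrm{level}(\sigma),\mathrm{level}(\tau))$; $\mathrm{level}(\sigma\cap\tau)=\max(\mathrm{level}(\sigma),\mathrm{level}(\tau))$; for a substitution $S$, $\mathrm{level}(S)=\max_{\alpha\in\mathrm{dom}(S)}\mathrm{level}(S(\alpha))$. A repository $\Delta$ is a finite set of $C:\tau$ with distinct names; $\Delta(C)$ is the type of $C$. Combinatory terms $E::=C\mid(E\,E')$. Rules of $\Delta\vdash_k$: from $C:\tau\in\Delta$ and $\mathrm{level}(S)\le k$ infer $\Delta\vdash_k C:S(\tau)$; $\to$-elimination; $\cap$-introduction; subsumption along $\le$. Paths: $\pi ::= a\mid\alpha\mid\sigma\to\pi\mid c(\omega)\mid c(\pi)$. The set of paths of a type: $\mathbb{P}(a)=\{a\}$, $\mathbb{P}(\alpha)=\{\alpha\}$, $\mathbb{P}(\omega)=\emptyset$, $\mathbb{P}(\sigma\to\tau)=\{\sigma\to\pi\mid\pi\in\mathbb{P}(\tau)\}$, $\mathbb{P}(\sigma\cap\tau)=\mathbb{P}(\sigma)\cup\mathbb{P}(\tau)$, $\mathbb{P}(c(\tau))=\{c(\omega)\}$ if $\mathbb{P}(\tau)=\emptyset$ and $\{c(\pi)\mid\pi\in\mathbb{P}(\tau)\}$ otherwise. A path has arity at least $m$ if it is $\sigma_1\to\cdots\to\sigma_m\to\tau$; then $\mathrm{arg}_i(\pi)=\sigma_i$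 and $\mathrm{tgt}_m(\pi)=\tau$. $\mathbb{P}_m(\tau)$ is the set of paths in $\mathbb{P}(\tau)$ of arity at least $m$. The intersection of an empty family is $\omega$. $\mathrm{atoms}(\tau)$ is the set of constants, type variables and constructor names occurring in $\tau$; $\mathrm{atoms}(S)=\bigcup_{\alpha\in\mathrm{dom}(S)}\mathrm{atoms}(S(\alpha))$; $\mathrm{atoms}(\Delta)=\bigcup_{C:\tau\in\Delta}\mathrm{atoms}(\tau)$. The intersection over substitutions in (2) is taken modulo type equivalence $=$ (there are only finitely many such instances up to $=$). *)

(* Defs.v *)
From Stdlib Require Import List Arith.
Import ListNotations.

Inductive ty : Type :=
| Const (a : nat)
| TVar (alpha : nat)
| Omega
| Arr (s t : ty)
| Inter (s t : ty)
| Ctor (c : nat) (t : ty).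

Inductive sub : ty -> ty -> Prop :=
| sub_refl s : sub s s
| sub_trans s t u : sub s t -> sub t u -> sub s u
| sub_omega s : sub s Omega
| sub_omega_arr : sub Omega (Arr Omega Omega)
| sub_inter_l s t : sub (Inter s t) s
| sub_inter_r s t : sub (Inter s t) t
| sub_inter_intro s t1 t2 : sub s t1 -> sub s t2 -> sub s (Inter t1 t2)
| sub_arr_dist s t1 t2 : sub (Inter (Arr s t1) (Arr s t2)) (Arr s (Inter t1 t2))
| sub_arr s1 s2 t1 t2 : sub s2 s1 -> sub t1 t2 -> sub (Arr s1 t1) (Arr s2 t2)
| sub_ctor c t1 t2 : sub t1 t2 -> sub (Ctor c t1) (Ctor c t2)
| sub_ctor_dist c t1 t2 : sub (Inter (Ctor c t1) (Ctor c t2)) (Ctor c (Inter t1 t2)).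

Definition ty_equiv (s t : ty) : Prop := sub s t /\ sub t s.

Fixpoint level (t : ty) : nat :=
  match t with
  | Const _ | TVar _ | Omega => 0
  | Ctor _ t => S (level t)
  | Arr s t => S (Nat.max (level s) (level t))
  | Inter s t => Nat.max (level s) (level t)
  end.

Definition subst := list (nat * ty).
Definition wf_subst (S : subst) : Prop := NoDup (map fst S).

Definition subst_var (S : subst) (n : nat) : ty :=
  match find (fun p => Nat.eqb (fst p) n) S with
  | Some p => snd p
  | None => TVar n
  end.

Fixpoint apply_subst (S : subst) (t : ty) : ty :=
  match t with
  | Const a => Const a
  | TVar n => subst_var S n
  | Omega => Omega
  | Arr s t => Arr (apply_subst S s) (apply_subst S t)
  | Inter s t => Inter (apply_subst S s) (apply_subst S t)
  | Ctor c t => Ctor c (apply_subst S t)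
  end.

Definition level_subst (S : subst) : nat :=
  fold_right Nat.max 0 (map (fun p => level (snd p)) S).

Inductive atom : Type :=
| AConst (a : nat)
| AVar (alpha : nat)
| ACtor (c : nat).

Fixpoint atoms_ty (t : ty) : list atom :=
  match t with
  | Const a => [AConst a]
  | TVar n => [AVar n]
  | Omega => []
  | Arr s t => atoms_ty s ++ atoms_ty t
  | Inter s t => atoms_ty s ++ atoms_ty t
  | Ctor c t => ACtor c :: atoms_ty t
  end.

Definition atoms_subst (S : subst) : list atom :=
  flat_map (fun p => atoms_ty (snd p)) S.

Definition repo := list (nat * ty).
Definition repo_wf (D : repo) : Prop := NoDup (map fst D).

Definition atoms_repo (D : repo) : list atom :=
  flat_map (fun p => atoms_ty (snd p)) D.

Inductive term : Type :=
| Comb (C : nat)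
| App (E F : term).

Definition apps (E : term) (Es : list term) : term := fold_left App Es E.

Inductive typed (D : repo) (k : nat) : term -> ty -> Prop :=
| T_var C t S : In (C, t) D -> wf_subst S -> level_subst S <= k ->
    typed D k (Comb C) (apply_subst S t)
| T_app E F s t : typed D k E (Arr s t) -> typed D k F s -> typed D k (App E F) t
| T_inter E s t : typed D k E s -> typed D k E t -> typed D k E (Inter s t)
| T_sub E s t : typed D k E s -> sub s t -> typed D k E t.

Fixpoint paths (t : ty) : list ty :=
  match t with
  | Const a => [Const a]
  | TVar n => [TVar n]
  | Omega => []
  | Arr s t => map (Arr s) (paths t)
  | Inter s t => paths s ++ paths t
  | Ctor c t =>
      match paths t with
      | [] => [Ctor c Omega]
      | ps => map (Ctor c) ps
      end
  end.

Fixpoint arity_ge (m : nat) (p : ty) : Prop :=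
  match m with
  | 0 => True
  | S m' => match p with Arr _ t => arity_ge m' t | _ => False end
  end.

(* arg i (0-indexed; the paper's arg_{i+1}) *)
Fixpoint arg (i : nat) (p : ty) : ty :=
  match i, p with
  | 0, Arr s _ => s
  | S i', Arr _ t => arg i' t
  | _, _ => Omega
  end.

Fixpoint tgt (m : nat) (p : ty) : ty :=
  match m, p with
  | 0, p => p
  | S m', Arr _ t => tgt m' t
  | _, _ => Omega
  end.

Fixpoint bigcap (l : list ty) : ty :=
  match l with
  | [] => Omega
  | [x] => x
  | x :: l' => Inter x (bigcap l')
  end.

Definition admissible (D : repo) (tau : ty) (k : nat) (S : subst) : Prop :=
  wf_subst S /\ level_subst S <= k /\
  incl (atoms_subst S) (atoms_repo D ++ atoms_ty tau).

(* Main.v *)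
Require Import Defs.
From Stdlib Require Import List Arith Lia ClassicalEpsilon.
Import ListNotations.

Definition dec (P : Prop) : bool := if excluded_middle_informative P then true else false.
Lemma dec_true (P : Prop) : P -> dec P = true.
Proof. unfold dec; destruct (excluded_middle_informative P); tauto. Qed.
Lemma dec_true_inv (P : Prop) : dec P = true -> P.
Proof. unfold dec; destruct (excluded_middle_informative P); congruence. Qed.
Lemma dec_false (P : Prop) : ~ P -> dec P = false.
Proof. unfold dec; destruct (excluded_middle_informative P); tauto. Qed.

Lemma bigcap_mem : forall l x, In x l -> sub (bigcap l) x.
Proof.
  induction l as [|a l IH]; intros x H; [destruct H|].
  destruct l as [|y l].
  - destruct H as [<-|[]]. apply sub_refl.
  - destruct H as [<-|H].
    + apply sub_inter_l.
    + eapply sub_trans; [apply sub_inter_r|]. apply IH; exact H.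
Qed.

Lemma bigcap_glb : forall l s, (forall x, In x l -> sub s x) -> sub s (bigcap l).
Proof.
  induction l as [|a l IH]; intros s H; [apply sub_omega|].
  destruct l as [|y l].
  - apply H; left; reflexivity.
  - apply sub_inter_intro; [apply H; left; reflexivity|].
    apply IH; intros x Hx; apply H; right; exact Hx.
Qed.

Lemma bigcap_incl : forall l1 l2, incl l2 l1 -> sub (bigcap l1) (bigcap l2).
Proof.
  intros l1 l2 H; apply bigcap_glb; intros x Hx; apply bigcap_mem, H, Hx.
Qed.

Lemma bigcap_app_r : forall l1 l2, sub (Inter (bigcap l1) (bigcap l2)) (bigcap (l1 ++ l2)).
Proof.
  intros l1 l2; apply bigcap_glb; intros x Hx; apply in_app_or in Hx as [Hx|Hx].
  - eapply sub_trans; [apply sub_inter_l|apply bigcap_mem, Hx].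
  - eapply sub_trans; [apply sub_inter_r|apply bigcap_mem, Hx].
Qed.

Lemma bigcap_flat {X : Type} (f : ty -> list X) :
  f Omega = [] -> (forall a b, f (Inter a b) = f a ++ f b) ->
  forall l, f (bigcap l) = flat_map f l.
Proof.
  intros H0 HI; induction l as [|a l IH]; [exact H0|].
  destruct l as [|y l].
  - simpl; rewrite app_nil_r; reflexivity.
  - change (f (Inter a (bigcap (y :: l))) = f a ++ flat_map f (y :: l)).
    rewrite HI, IH; reflexivity.
Qed.

Lemma omega_arr s : sub Omega (Arr s Omega).
Proof. eapply sub_trans; [apply sub_omega_arr|]. apply sub_arr; apply sub_omega. Qed.

Lemma bigcap_map_arr : forall s l, sub (bigcap (map (Arr s) l)) (Arr s (bigcap l)).
Proof.
  intros s; induction l as [|a l IH]; [apply omega_arr|].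
  destruct l as [|y l]; [apply sub_refl|].
  change (sub (Inter (Arr s a) (bigcap (map (Arr s) (y :: l)))) (Arr s (Inter a (bigcap (y :: l))))).
  eapply sub_trans; [|apply sub_arr_dist].
  apply sub_inter_intro; [apply sub_inter_l|].
  eapply sub_trans; [apply sub_inter_r|exact IH].
Qed.

Lemma bigcap_map_ctor : forall c l, l <> [] -> sub (bigcap (map (Ctor c) l)) (Ctor c (bigcap l)).
Proof.
  intros c; induction l as [|a l IH]; intros Hne; [congruence|].
  destruct l as [|y l]; [apply sub_refl|].
  change (sub (Inter (Ctor c a) (bigcap (map (Ctor c) (y :: l)))) (Ctor c (Inter a (bigcap (y :: l))))).
  eapply sub_trans; [|apply sub_ctor_dist].
  apply sub_inter_intro; [apply sub_inter_l|].
  eapply sub_trans; [apply sub_inter_r|apply IH; discriminate].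
Qed.

Lemma paths_sub : forall t p, In p (paths t) -> sub t p.
Proof.
  induction t; simpl; intros p H.
  - destruct H as [<-|[]]; apply sub_refl.
  - destruct H as [<-|[]]; apply sub_refl.
  - destruct H.
  - apply in_map_iff in H as [p' [<- H]]. apply sub_arr; [apply sub_refl|apply IHt2, H].
  - apply in_app_or in H as [H|H].
    + eapply sub_trans; [apply sub_inter_l|apply IHt1, H].
    + eapply sub_trans; [apply sub_inter_r|apply IHt2, H].
  - destruct (paths t) as [|q l] eqn:E.
    + destruct H as [<-|[]]. apply sub_ctor, sub_omega.
    + change (In p (map (Ctor c) (q :: l))) in H.
      apply in_map_iff in H as [p' [<- H]]. apply sub_ctor; apply IHt, H.
Qed.

Lemma paths_le : forall t, sub (bigcap (paths t)) t.
Proof.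
  induction t; simpl.
  - apply sub_refl.
  - apply sub_refl.
  - apply sub_refl.
  - eapply sub_trans; [apply bigcap_map_arr|]. apply sub_arr; [apply sub_refl|exact IHt2].
  - apply sub_inter_intro.
    + eapply sub_trans; [|apply IHt1]. apply bigcap_incl; intros x Hx; apply in_or_app; auto.
    + eapply sub_trans; [|apply IHt2]. apply bigcap_incl; intros x Hx; apply in_or_app; auto.
  - destruct (paths t) as [|q l] eqn:E.
    + apply sub_ctor. exact IHt.
    + change (sub (bigcap (map (Ctor c) (q :: l))) (Ctor c t)).
      eapply sub_trans; [apply bigcap_map_ctor; discriminate|].
      apply sub_ctor; exact IHt.
Qed.


Fixpoint arrs (t : ty) : list (ty * ty) :=
  match t with Arr s u => [(s, u)] | Inter s u => arrs s ++ arrs u | _ => [] end.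
Fixpoint tops (t : ty) : list ty :=
  match t with Const a => [Const a] | TVar n => [TVar n] | Inter s u => tops s ++ tops u | _ => [] end.
Fixpoint ctors (t : ty) : list (nat * ty) :=
  match t with Ctor c u => [(c, u)] | Inter s u => ctors s ++ ctors u | _ => [] end.

Definition Fapp (t s : ty) : ty :=
  bigcap (map snd (filter (fun x => dec (sub s (fst x))) (arrs t))).
Definition Hc (c : nat) (t : ty) : ty :=
  bigcap (map snd (filter (fun x => Nat.eqb (fst x) c) (ctors t))).

Lemma Fapp_mono : forall t u, sub t u -> forall s, sub (Fapp t s) (Fapp u s).
Proof.
  intros t u H; induction H; intros σ; unfold Fapp in *; simpl.
  - apply sub_refl.
  - eapply sub_trans; [apply IHsub1|apply IHsub2].
  - apply sub_omega.
  - destruct (dec (sub σ Omega)); apply sub_refl.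
  - apply bigcap_incl. rewrite filter_app, map_app. intros x Hx; apply in_or_app; auto.
  - apply bigcap_incl. rewrite filter_app, map_app. intros x Hx; apply in_or_app; auto.
  - rewrite filter_app, map_app. eapply sub_trans; [|apply bigcap_app_r].
    apply sub_inter_intro; auto.
  - destruct (dec (sub σ s)); apply sub_refl.
  - destruct (dec (sub σ s2)) eqn:E.
    + rewrite dec_true. { simpl; exact H0. }
      eapply sub_trans; [apply dec_true_inv, E|exact H].
    + apply sub_omega.
  - apply sub_refl.
  - apply sub_refl.
Qed.

Lemma tops_mono : forall t u, sub t u -> incl (tops u) (tops t).
Proof.
  intros t u H; induction H; simpl; intros x Hx; try tauto;
  solve [ apply IHsub1, IHsub2, Hx | apply in_or_app; auto | (apply in_app_or in Hx as [Hx|Hx]; auto)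
        | (rewrite app_nil_r in Hx; exact Hx) ].
Qed.

Lemma Hc_mono : forall t u, sub t u -> forall c, sub (Hc c t) (Hc c u).
Proof.
  intros t u H; induction H; intros c'; unfold Hc in *; simpl.
  - apply sub_refl.
  - eapply sub_trans; [apply IHsub1|apply IHsub2].
  - apply sub_omega.
  - apply sub_refl.
  - apply bigcap_incl. rewrite filter_app, map_app. intros x Hx; apply in_or_app; auto.
  - apply bigcap_incl. rewrite filter_app, map_app. intros x Hx; apply in_or_app; auto.
  - rewrite filter_app, map_app. eapply sub_trans; [|apply bigcap_app_r].
    apply sub_inter_intro; auto.
  - apply sub_refl.
  - apply sub_refl.
  - destruct (Nat.eqb c c'); simpl; [exact H|apply sub_refl].
  - destruct (Nat.eqb c c'); simpl; apply sub_refl.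
Qed.

Lemma ctors_mono : forall t u, sub t u -> incl (map fst (ctors u)) (map fst (ctors t)).
Proof.
  intros t u H; induction H; simpl; intros x Hx; try tauto;
  solve [ apply IHsub1, IHsub2, Hx | rewrite map_app; apply in_or_app; auto
        | (rewrite map_app in Hx; apply in_app_or in Hx as [Hx|Hx]; auto)
        | (destruct Hx as [<-|[]]; left; reflexivity) ].
Qed.

Inductive path : ty -> Prop :=
| pC a : path (Const a)
| pV n : path (TVar n)
| pA s t : path t -> path (Arr s t)
| pCO c : path (Ctor c Omega)
| pCP c t : path t -> path (Ctor c t).

Definition pathO t := path t \/ t = Omega.

Lemma paths_path : forall t p, In p (paths t) -> path p.
Proof.
  induction t; simpl; intros p Hp.
  - destruct Hp as [<-|[]]; constructor.
  - destruct Hp as [<-|[]]; constructor.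
  - destruct Hp.
  - apply in_map_iff in Hp as [p' [<- Hp]]. constructor; apply IHt2, Hp.
  - apply in_app_or in Hp as [Hp|Hp]; auto.
  - destruct (paths t) as [|q l] eqn:E.
    + destruct Hp as [<-|[]]. constructor.
    + change (In p (map (Ctor c) (q :: l))) in Hp.
      apply in_map_iff in Hp as [p' [<- Hp]]. constructor; apply IHt, Hp.
Qed.

Lemma Fapp_arr s t : Fapp (Arr s t) s = t.
Proof. unfold Fapp; simpl. rewrite dec_true by apply sub_refl. reflexivity. Qed.

Lemma omega_not_path : forall p, path p -> ~ sub Omega p.
Proof.
  induction 1 as [a|n|s t Ht IHpath|c|c t Ht IHpath]; intros Hs.
  - apply tops_mono in Hs. specialize (Hs (Const a) (or_introl eq_refl)). destruct Hs.
  - apply tops_mono in Hs. specialize (Hs (TVar n) (or_introl eq_refl)). destruct Hs.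
  - apply IHpath. pose proof (Fapp_mono _ _ Hs s) as H1. rewrite Fapp_arr in H1. exact H1.
  - apply ctors_mono in Hs. specialize (Hs c (or_introl eq_refl)). destruct Hs.
  - apply ctors_mono in Hs. specialize (Hs c (or_introl eq_refl)). destruct Hs.
Qed.

Lemma tops_pathO q x : pathO q -> In x (tops q) -> q = x.
Proof.
  intros [Hq| ->] Hx; [|destruct Hx].
  destruct Hq; simpl in Hx; try tauto; destruct Hx as [<-|[]]; reflexivity.
Qed.

Lemma arrs_pathO q x : pathO q -> In x (arrs q) -> q = Arr (fst x) (snd x) /\ path (snd x).
Proof.
  intros [Hq| ->] Hx; [|destruct Hx].
  destruct Hq; simpl in Hx; try tauto; destruct Hx as [<-|[]]; simpl; auto.
Qed.

Lemma ctors_pathO q x : pathO q -> In x (ctors q) -> q = Ctor (fst x) (snd x) /\ pathO (snd x).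
Proof.
  intros [Hq| ->] Hx; [|destruct Hx].
  destruct Hq; simpl in Hx; try tauto; destruct Hx as [<-|[]]; simpl; split; auto;
    unfold pathO; auto.
Qed.

Lemma arrs_bigcap l : arrs (bigcap l) = flat_map arrs l.
Proof. apply bigcap_flat; reflexivity. Qed.
Lemma tops_bigcap l : tops (bigcap l) = flat_map tops l.
Proof. apply bigcap_flat; reflexivity. Qed.
Lemma ctors_bigcap l : ctors (bigcap l) = flat_map ctors l.
Proof. apply bigcap_flat; reflexivity. Qed.

Lemma prime : forall p, path p -> forall Q, (forall q, In q Q -> pathO q) ->
  sub (bigcap Q) p -> exists q, In q Q /\ sub q p.
Proof.
  induction 1 as [a|n|s t Ht IHpath|c|c t Ht IHpath]; intros Q HQ Hs.
  - apply tops_mono in Hs. specialize (Hs (Const a) (or_introl eq_refl)).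
    rewrite tops_bigcap in Hs. apply in_flat_map in Hs as [q [Hq Hx]].
    exists q; split; auto. rewrite (tops_pathO q _ (HQ q Hq) Hx). apply sub_refl.
  - apply tops_mono in Hs. specialize (Hs (TVar n) (or_introl eq_refl)).
    rewrite tops_bigcap in Hs. apply in_flat_map in Hs as [q [Hq Hx]].
    exists q; split; auto. rewrite (tops_pathO q _ (HQ q Hq) Hx). apply sub_refl.
  - pose proof (Fapp_mono _ _ Hs s) as H1. rewrite Fapp_arr in H1.
    unfold Fapp in H1. rewrite arrs_bigcap in H1.
    destruct (IHpath _ ltac:(intros q Hq; apply in_map_iff in Hq as [x [<- Hx]];
        apply filter_In in Hx as [Hx _]; apply in_flat_map in Hx as [q' [Hq' Hx]];
        left; apply (arrs_pathO q' x (HQ q' Hq') Hx)) H1) as [ρ [Hρ Hs2]].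
    apply in_map_iff in Hρ as [x [<- Hx]].
    apply filter_In in Hx as [Hx Hd]; apply in_flat_map in Hx as [q' [Hq' Hx]].
    exists q'; split; auto. destruct (arrs_pathO q' x (HQ q' Hq') Hx) as [-> _].
    apply sub_arr; [apply dec_true_inv, Hd|exact Hs2].
  - apply ctors_mono in Hs. specialize (Hs c (or_introl eq_refl)).
    rewrite ctors_bigcap in Hs. apply in_map_iff in Hs as [x [Hc Hx]].
    apply in_flat_map in Hx as [q [Hq Hx]].
    exists q; split; auto. destruct (ctors_pathO q x (HQ q Hq) Hx) as [-> _].
    rewrite Hc. apply sub_ctor, sub_omega.
  - pose proof (Hc_mono _ _ Hs c) as H1. unfold Hc at 2 in H1. simpl in H1.
    rewrite Nat.eqb_refl in H1. simpl in H1.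
    unfold Hc in H1. rewrite ctors_bigcap in H1.
    destruct (IHpath _ ltac:(intros q Hq; apply in_map_iff in Hq as [x [<- Hx]];
        apply filter_In in Hx as [Hx _]; apply in_flat_map in Hx as [q' [Hq' Hx]];
        apply (ctors_pathO q' x (HQ q' Hq') Hx)) H1) as [ρ [Hρ Hs2]].
    apply in_map_iff in Hρ as [x [<- Hx]].
    apply filter_In in Hx as [Hx Hd]; apply in_flat_map in Hx as [q' [Hq' Hx]].
    exists q'; split; auto. destruct (ctors_pathO q' x (HQ q' Hq') Hx) as [-> _].
    apply Nat.eqb_eq in Hd. rewrite Hd. apply sub_ctor, Hs2.
Qed.

Lemma arr_step q s p : path q -> path p -> sub q (Arr s p) ->
  exists s' p', q = Arr s' p' /\ sub s s' /\ sub p' p.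
Proof.
  intros Hq Hp H. pose proof (Fapp_mono _ _ H s) as H1. rewrite Fapp_arr in H1.
  destruct q; try (exfalso; apply (omega_not_path p Hp), H1).
  - unfold Fapp in H1; simpl in H1. destruct (dec (sub s q1)) eqn:E.
    + exists q1, q2; repeat split; auto. apply dec_true_inv, E.
    + exfalso; apply (omega_not_path p Hp), H1.
  - inversion Hq.
Qed.

Lemma multi_step : forall m q p, path q -> path p -> arity_ge m p -> sub q p ->
  arity_ge m q /\ (forall i, i < m -> sub (arg i p) (arg i q)) /\ sub (tgt m q) (tgt m p).
Proof.
  induction m; intros q p Hq Hp Ha H.
  - simpl; repeat split; auto. intros i Hi; lia.
  - destruct p; try destruct Ha. inversion Hp; subst.
    destruct (arr_step q p1 p2 Hq H1 H) as [s' [p' [-> [Hs Hp']]]].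
    inversion Hq; subst.
    destruct (IHm p' p2 H2 H1 Ha Hp') as [A1 [A2 A3]].
    repeat split; auto.
    intros [|i] Hi; simpl; auto. apply A2; lia.
Qed.


Lemma atom_eq_dec : forall x y : atom, {x = y} + {x <> y}.
Proof. decide equality; apply Nat.eq_dec. Qed.

Definition inA (A : list atom) (x : atom) : bool := if in_dec atom_eq_dec x A then true else false.
Lemma inA_true A x : In x A -> inA A x = true.
Proof. unfold inA; destruct (in_dec atom_eq_dec x A); tauto. Qed.
Lemma inA_in A x : inA A x = true -> In x A.
Proof. unfold inA; destruct (in_dec atom_eq_dec x A); congruence. Qed.

Fixpoint theta (A : list atom) (t : ty) : ty :=
  match t with
  | Const a => if inA A (AConst a) then Const a else Omega
  | TVar n => if inA A (AVar n) then TVar n else Omega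
  | Omega => Omega
  | Arr s u => Arr (theta A s) (theta A u)
  | Inter s u => Inter (theta A s) (theta A u)
  | Ctor c u => if inA A (ACtor c) then Ctor c (theta A u) else Omega
  end.

Lemma theta_sub A : forall s t, sub s t -> sub (theta A s) (theta A t).
Proof.
  intros s t H; induction H; simpl; try (constructor; assumption).
  all: try solve [eapply sub_trans; eauto | apply sub_omega_arr].
  all: destruct (inA A (ACtor c)); solve [apply sub_ctor; auto | apply sub_refl | apply sub_ctor_dist | apply sub_omega].
Qed.

Lemma theta_id A : forall t, incl (atoms_ty t) A -> theta A t = t.
Proof.
  induction t; simpl; intros H; try reflexivity.
  - rewrite inA_true; auto. apply H; left; auto.
  - rewrite inA_true; auto. apply H; left; auto.
  - rewrite IHt1, IHt2; auto; intros x Hx; apply H, in_or_app; auto.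
  - rewrite IHt1, IHt2; auto; intros x Hx; apply H, in_or_app; auto.
  - rewrite inA_true by (apply H; left; auto). rewrite IHt; auto.
    intros x Hx; apply H; right; auto.
Qed.

Definition theta_subst A (S : subst) : subst := map (fun p => (fst p, theta A (snd p))) S.

Lemma theta_subst_var A S n : In (AVar n) A -> theta A (subst_var S n) = subst_var (theta_subst A S) n.
Proof.
  intros Hn; unfold subst_var; induction S as [|[m u] S IH]; simpl.
  - rewrite inA_true; auto.
  - destruct (Nat.eqb m n); simpl; auto.
Qed.

Lemma theta_apply A S : forall t, incl (atoms_ty t) A ->
  theta A (apply_subst S t) = apply_subst (theta_subst A S) t.
Proof.
  induction t; simpl; intros H; try reflexivity.
  - rewrite inA_true; auto. apply H; left; auto.
  - apply theta_subst_var. apply H; left; auto.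
  - rewrite IHt1, IHt2; auto; intros x Hx; apply H, in_or_app; auto.
  - rewrite IHt1, IHt2; auto; intros x Hx; apply H, in_or_app; auto.
  - rewrite inA_true by (apply H; left; auto). rewrite IHt; auto.
    intros x Hx; apply H; right; auto.
Qed.

Lemma theta_level A : forall t, level (theta A t) <= level t.
Proof.
  induction t; simpl; try lia.
  - destruct (inA A (AConst a)); simpl; lia.
  - destruct (inA A (AVar alpha)); simpl; lia.
  - destruct (inA A (ACtor c)); simpl; lia.
Qed.

Lemma theta_atoms A : forall t, incl (atoms_ty (theta A t)) A.
Proof.
  induction t; simpl; intros x Hx.
  - destruct (inA A (AConst a)) eqn:E; simpl in Hx; [|tauto].
    destruct Hx as [<-|[]]; apply inA_in, E.
  - destruct (inA A (AVar alpha)) eqn:E; simpl in Hx; [|tauto].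
    destruct Hx as [<-|[]]; apply inA_in, E.
  - destruct Hx.
  - apply in_app_or in Hx as [Hx|Hx]; auto.
  - apply in_app_or in Hx as [Hx|Hx]; auto.
  - destruct (inA A (ACtor c)) eqn:E; simpl in Hx; [|tauto].
    destruct Hx as [<-|Hx]; [apply inA_in, E|auto].
Qed.

Lemma theta_subst_wf A S : wf_subst S -> wf_subst (theta_subst A S).
Proof. unfold wf_subst, theta_subst; rewrite map_map; simpl. rewrite <- (map_map (fun p => p) fst). rewrite map_id. auto. Qed.

Lemma theta_subst_level A S : level_subst (theta_subst A S) <= level_subst S.
Proof.
  unfold level_subst, theta_subst; induction S as [|[m u] S IH]; simpl; auto.
  pose proof (theta_level A u); lia.
Qed.

Lemma theta_subst_atoms A S : incl (atoms_subst (theta_subst A S)) A.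
Proof.
  unfold atoms_subst, theta_subst; intros x Hx.
  apply in_flat_map in Hx as [p [Hp Hx]]. apply in_map_iff in Hp as [q [<- _]].
  simpl in Hx. apply (theta_atoms A _ _ Hx).
Qed.

Inductive typedR (D : repo) (k : nat) (A : list atom) : term -> ty -> Prop :=
| R_var C t S : In (C, t) D -> wf_subst S -> level_subst S <= k -> incl (atoms_subst S) A ->
    typedR D k A (Comb C) (apply_subst S t)
| R_app E F s t : typedR D k A E (Arr s t) -> typedR D k A F s -> typedR D k A (App E F) t
| R_inter E s t : typedR D k A E s -> typedR D k A E t -> typedR D k A E (Inter s t)
| R_sub E s t : typedR D k A E s -> sub s t -> typedR D k A E t.

Lemma typedR_typed D k A E t : typedR D k A E t -> typed D k E t.
Proof. induction 1; [econstructor 1|econstructor 2|econstructor 3|econstructor 4]; eauto. Qed.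

Lemma typed_theta D k A : incl (atoms_repo D) A ->
  forall E t, typed D k E t -> typedR D k A E (theta A t).
Proof.
  intros HA E t H; induction H; simpl.
  - rewrite theta_apply.
    + constructor; auto using theta_subst_wf, theta_subst_atoms.
      pose proof (theta_subst_level A S); lia.
    + intros x Hx; apply HA. unfold atoms_repo. apply in_flat_map. exists (C, t); auto.
  - econstructor 2; eauto.
  - econstructor 3; eauto.
  - econstructor 4; eauto. apply theta_sub; auto.
Qed.


Lemma apps_App : forall Es E F, exists a b, apps (App E F) Es = App a b.
Proof.
  induction Es as [|x Es IH]; intros E F; simpl; [eauto|apply IH].
Qed.

Lemma apps_comb C Es C' : apps (Comb C) Es = Comb C' -> Es = [] /\ C = C'.
Proof.
  destruct Es as [|x Es]; simpl; intros H.
  - injection H; auto.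
  - destruct (apps_App Es (Comb C) x) as [a [b Hab]]. rewrite Hab in H; discriminate.
Qed.

Lemma apps_snoc E Es F : apps E (Es ++ [F]) = App (apps E Es) F.
Proof. unfold apps; rewrite fold_left_app; reflexivity. Qed.

Lemma apps_app_inv C Es E1 F : apps (Comb C) Es = App E1 F ->
  exists Es', Es = Es' ++ [F] /\ E1 = apps (Comb C) Es'.
Proof.
  destruct Es as [|x Es] using rev_ind; intros H.
  - discriminate.
  - rewrite apps_snoc in H. injection H; intros -> <-. eauto.
Qed.

Lemma repo_uniq : forall (D : repo) C t t', NoDup (map fst D) -> In (C, t) D -> In (C, t') D -> t = t'.
Proof.
  induction D as [|[c u] D IH]; simpl; intros C t t' Hn H1 H2; [destruct H1|].
  inversion Hn as [|? ? Hni Hn']; subst.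
  destruct H1 as [H1|H1], H2 as [H2|H2].
  - injection H1; injection H2; intros; subst; auto.
  - injection H1; intros; subst. exfalso; apply Hni. apply in_map_iff; exists (C, t'); auto.
  - injection H2; intros; subst. exfalso; apply Hni. apply in_map_iff; exists (C, t); auto.
  - eauto.
Qed.

Lemma tgt_S : forall m p, tgt (S m) p = tgt 1 (tgt m p).
Proof.
  induction m; intros p; [reflexivity|].
  destruct p; try reflexivity. change (tgt (S m) p2 = tgt 1 (tgt m p2)). apply IHm.
Qed.

Lemma arg_tgt : forall m p, arg m p = arg 0 (tgt m p).
Proof.
  induction m; intros p; [reflexivity|].
  destruct p; try reflexivity. simpl. apply IHm.
Qed.

Lemma arity_S : forall m p s u, arity_ge m p -> tgt m p = Arr s u -> arity_ge (S m) p.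
Proof.
  induction m; intros p s u H E.
  - simpl in E; subst; simpl; exact I.
  - destruct p; try destruct H. simpl in H, E. change (arity_ge (S m) p2). eapply IHm; eauto.
Qed.

Lemma tgt_path : forall m p, arity_ge m p -> path p -> path (tgt m p).
Proof.
  induction m; intros p H Hp; [exact Hp|].
  destruct p; try destruct H. inversion Hp; subst. simpl. auto.
Qed.

Lemma arity_tgt1 : forall m p, arity_ge (S m) p -> arity_ge m (tgt 1 p).
Proof. intros m p H; destruct p; try destruct H; exact H. Qed.


Definition good (k : nat) (A : list atom) (tC : ty) (p : ty) : Prop :=
  exists S, wf_subst S /\ level_subst S <= k /\ incl (atoms_subst S) A /\ In p (paths (apply_subst S tC)).

Definition gfilt (m : nat) (s : ty) (p : ty) : bool :=
  match tgt m p with Arr σ _ => dec (sub s σ) | _ => false end.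

Lemma fapp_eq : forall m s P, (forall p, In p P -> path (tgt m p)) ->
  map snd (filter (fun x => dec (sub s (fst x))) (flat_map arrs (map (tgt m) P)))
  = map (tgt (S m)) (filter (gfilt m s) P).
Proof.
  induction P as [|p P IH]; intros HP; [reflexivity|].
  cbn [map flat_map filter]. rewrite filter_app, map_app. rewrite IH by (intros; apply HP; right; auto).
  pose proof (HP p (or_introl eq_refl)) as Hp.
  assert (Hg : gfilt m s p = match tgt m p with Arr σ _ => dec (sub s σ) | _ => false end) by reflexivity.
  destruct (tgt m p) as [| | |σ ρ| |] eqn:E; rewrite Hg; cbn [arrs filter fst map app]; try reflexivity.
  - destruct (dec (sub s σ)); cbn [map app]; [|reflexivity].
    rewrite (tgt_S m p), E. reflexivity.
  - inversion Hp.
Qed.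

Lemma gen (D : repo) (k : nat) (A : list atom) (C : nat) (tC : ty)
  (HD : repo_wf D) (HC : In (C, tC) D) : forall E t, typedR D k A E t -> forall Es, E = apps (Comb C) Es ->
  exists P, (forall p, In p P -> good k A tC p /\ arity_ge (length Es) p) /\
    sub (bigcap (map (tgt (length Es)) P)) t /\
    (forall i, i < length Es -> typed D k (nth i Es (Comb C)) (bigcap (map (arg i) P))).
Proof.
  induction 1 as [C' t S Hin Hwf Hl Ha|E F s t H1 IH1 H2 IH2|E s t H1 IH1 H2 IH2|E s t H1 IH1 Hs];
    intros Es HE.
  - symmetry in HE; apply apps_comb in HE as [-> <-].
    rewrite (repo_uniq D C t tC HD Hin HC).
    exists (paths (apply_subst S tC)). split; [|split].
    + intros p Hp; split; [exists S; auto|exact I].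
    + cbn [length]. rewrite (map_ext (tgt 0) (fun x => x) (fun _ => eq_refl)), map_id. apply paths_le.
    + simpl; intros; lia.
  - symmetry in HE; apply apps_app_inv in HE as [Es' [-> HE]].
    destruct (IH1 Es' HE) as [P' [HP1 [HP2 HP3]]].
    rewrite length_app; simpl. rewrite Nat.add_1_r.
    set (m := length Es') in *.
    assert (Hpath : forall p, In p P' -> path (tgt m p)).
    { intros p Hp. destruct (HP1 p Hp) as [[S [_ [_ [_ Hin]]]] Ha].
      apply tgt_path; auto. eapply paths_path; eauto. }
    exists (filter (gfilt m s) P'). split; [|split].
    + intros p Hp; apply filter_In in Hp as [Hp Hg]. destruct (HP1 p Hp) as [Hgood Ha].
      split; [exact Hgood|].
      unfold gfilt in Hg. destruct (tgt m p) eqn:Et; try discriminate. eapply arity_S; eauto.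
    + pose proof (Fapp_mono _ _ HP2 s) as H. rewrite Fapp_arr in H.
      unfold Fapp in H. rewrite arrs_bigcap, fapp_eq in H by exact Hpath. exact H.
    + intros i Hi. destruct (Nat.eq_dec i m) as [->|Hne].
      * unfold m. rewrite nth_middle. eapply T_sub; [eapply typedR_typed; exact H2|].
        apply bigcap_glb. intros x Hx. apply in_map_iff in Hx as [p [<- Hp]].
        apply filter_In in Hp as [Hp Hg]. unfold gfilt in Hg. rewrite arg_tgt.
        destruct (tgt (length Es') p); try discriminate. apply dec_true_inv, Hg.
      * rewrite app_nth1 by lia. eapply T_sub; [apply HP3; lia|].
        apply bigcap_incl. intros x Hx. apply in_map_iff in Hx as [p [<- Hp]].
        apply filter_In in Hp as [Hp _]. apply in_map; auto.
  - destruct (IH1 Es HE) as [P1 [HP1 [HP2 HP3]]].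
    destruct (IH2 Es HE) as [P2 [HQ1 [HQ2 HQ3]]].
    exists (P1 ++ P2). split; [|split].
    + intros p Hp; apply in_app_or in Hp as [Hp|Hp]; [apply HP1|apply HQ1]; auto.
    + rewrite map_app. apply sub_inter_intro.
      * eapply sub_trans; [|exact HP2]. apply bigcap_incl; intros x Hx; apply in_or_app; auto.
      * eapply sub_trans; [|exact HQ2]. apply bigcap_incl; intros x Hx; apply in_or_app; auto.
    + intros i Hi. rewrite map_app. eapply T_sub; [apply T_inter; [apply HP3|apply HQ3]; auto|].
      apply bigcap_app_r.
  - destruct (IH1 Es HE) as [P [HP1 [HP2 HP3]]]. exists P; split; [|split]; auto.
    eapply sub_trans; eauto.
Qed.



Lemma typed_bigcap Dr k E : forall l, (forall x, In x l -> typed Dr k E x) -> typed Dr k E Omega ->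
  typed Dr k E (bigcap l).
Proof.
  induction l as [|a l IH]; intros H H0; [exact H0|].
  destruct l as [|y l]; [apply H; left; auto|].
  change (typed Dr k E (Inter a (bigcap (y :: l)))).
  apply T_inter; [apply H; left; auto|apply IH; auto; intros; apply H; right; auto].
Qed.

Lemma arg_tgt1 i l : arg i (tgt 1 l) = arg (S i) l.
Proof. destruct l; destruct i; reflexivity. Qed.
Lemma tgt_tgt1 m l : tgt m (tgt 1 l) = tgt (S m) l.
Proof. destruct l; destruct m; reflexivity. Qed.

Lemma back Dr k d : forall Es E L, (forall l, In l L -> arity_ge (length Es) l) ->
  typed Dr k E (bigcap L) ->
  (forall i, i < length Es -> typed Dr k (nth i Es d) (bigcap (map (arg i) L))) ->
  typed Dr k (apps E Es) (bigcap (map (tgt (length Es)) L)).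
Proof.
  induction Es as [|F Es IH]; intros E L HL HE Hi.
  - change (typed Dr k E (bigcap (map (tgt 0) L))). rewrite (map_ext (tgt 0) (fun x => x) (fun _ => eq_refl)), map_id. exact HE.
  - change (typed Dr k (apps (App E F) Es) (bigcap (map (tgt (S (length Es))) L))).
    rewrite <- (map_ext (fun l => tgt (length Es) (tgt 1 l)) (tgt (S (length Es))))
      by (intros; apply tgt_tgt1).
    rewrite <- map_map. apply IH.
    + intros l' Hl'. apply in_map_iff in Hl' as [l [<- Hl]]. apply arity_tgt1, HL, Hl.
    + eapply T_app; [|apply (Hi 0); simpl; lia].
      eapply T_sub; [exact HE|]. eapply sub_trans; [|apply bigcap_map_arr].
      apply bigcap_glb. intros y Hy. rewrite map_map in Hy. apply in_map_iff in Hy as [l [<- Hl]].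
      eapply sub_trans; [apply bigcap_mem, Hl|].
      pose proof (HL l Hl) as Ha. destruct l; try destruct Ha. simpl.
      apply sub_arr; [|apply sub_refl]. apply bigcap_mem.
      change l1 with (arg 0 (Arr l1 l2)). apply in_map, Hl.
    + intros i Hi'. rewrite map_map.
      rewrite (map_ext (fun x => arg i (tgt 1 x)) (arg (S i))) by (intros; apply arg_tgt1).
      apply (Hi (S i)). simpl; lia.
Qed.

Lemma choose {X Y : Type} (R : X -> Y -> Prop) : forall P, (forall p, In p P -> exists q, R p q) ->
  exists Q, Forall2 R P Q.
Proof.
  induction P as [|p P IH]; intros H; [exists []; constructor|].
  destruct (H p (or_introl eq_refl)) as [q Hq].
  destruct IH as [Q HQ]; [intros; apply H; right; auto|].
  exists (q :: Q); constructor; auto.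
Qed.

Lemma F2_in_r {X Y : Type} (R : X -> Y -> Prop) P Q q : Forall2 R P Q -> In q Q -> exists p, In p P /\ R p q.
Proof.
  induction 1; intros Hq; [destruct Hq|]. destruct Hq as [<-|Hq].
  - exists x; split; auto. left; auto.
  - destruct (IHForall2 Hq) as [p [Hp HR]]. exists p; split; auto. right; auto.
Qed.

Lemma F2_in_l {X Y : Type} (R : X -> Y -> Prop) P Q p : Forall2 R P Q -> In p P -> exists q, In q Q /\ R p q.
Proof.
  induction 1; intros Hp; [destruct Hp|]. destruct Hp as [<-|Hp].
  - exists y; split; auto. left; auto.
  - destruct (IHForall2 Hp) as [q [Hq HR]]. exists q; split; auto. right; auto.
Qed.

Theorem lemma4p11 (D : repo) (C : nat) (tC : ty) (Es : list term)
  (tau : ty) (k : nat) (Ss : list subst) :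
  repo_wf D ->
  In (C, tC) D ->
  (forall S, In S Ss -> admissible D tau k S) ->
  (forall S, admissible D tau k S ->
     exists S', In S' Ss /\ ty_equiv (apply_subst S tC) (apply_subst S' tC)) ->
  (typed D k (apps (Comb C) Es) tau <->
   exists P : list ty,
     (forall p, In p P ->
        In p (paths (bigcap (map (fun S => apply_subst S tC) Ss)))
        /\ arity_ge (length Es) p) /\
     sub (bigcap (map (tgt (length Es)) P)) tau /\
     (forall i, i < length Es ->
        typed D k (nth i Es (Comb C)) (bigcap (map (arg i) P)))).
Proof.
  intros HD HC HSs Hrep.
  set (X := bigcap (map (fun S => apply_subst S tC) Ss)).
  split.
  - intros H. set (A := atoms_repo D ++ atoms_ty tau).
    pose proof (typed_theta D k A (incl_appl _ (incl_refl _)) _ _ H) as HR.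
    rewrite theta_id in HR by (apply incl_appr, incl_refl).
    destruct (gen D k A C tC HD HC _ _ HR Es eq_refl) as [P [HP1 [HP2 HP3]]].
    set (m := length Es) in *.
    assert (Hq : forall p, In p P -> exists q, (In q (paths X) /\ arity_ge m q) /\
               (forall i, i < m -> sub (arg i p) (arg i q)) /\ sub (tgt m q) (tgt m p)).
    { intros p Hp. destruct (HP1 p Hp) as [[S [Hw [Hl [Ha Hin]]]] Har].
      destruct (Hrep S (conj Hw (conj Hl Ha))) as [S' [HS' [_ He2]]].
      assert (Hsub : sub (bigcap (paths X)) p).
      { eapply sub_trans; [apply paths_le|].
        eapply sub_trans; [apply bigcap_mem, in_map, HS'|].
        eapply sub_trans; [exact He2|]. apply paths_sub, Hin. }
      destruct (prime p (paths_path _ _ Hin) (paths X)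
                  (fun q Hq => or_introl (paths_path _ _ Hq)) Hsub) as [q [Hq Hqp]].
      destruct (multi_step m q p (paths_path _ _ Hq) (paths_path _ _ Hin) Har Hqp) as [B1 [B2 B3]].
      exists q; auto. }
    destruct (choose _ P Hq) as [Q HQ].
    exists Q. split; [|split].
    + intros q Hq'. destruct (F2_in_r _ _ _ _ HQ Hq') as [p [_ [HR1 _]]]. exact HR1.
    + eapply sub_trans; [|exact HP2]. apply bigcap_glb. intros y Hy.
      apply in_map_iff in Hy as [p [<- Hp]]. destruct (F2_in_l _ _ _ _ HQ Hp) as [q [Hq' [_ [_ Ht]]]].
      eapply sub_trans; [apply bigcap_mem, in_map, Hq'|exact Ht].
    + intros i Hi. eapply T_sub; [apply HP3, Hi|]. apply bigcap_glb. intros y Hy.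
      apply in_map_iff in Hy as [q [<- Hq']]. destruct (F2_in_r _ _ _ _ HQ Hq') as [p [Hp [_ [Ha _]]]].
      eapply sub_trans; [apply bigcap_mem, in_map, Hp|apply Ha, Hi].
  - intros [P [HP1 [HP2 HP3]]]. eapply T_sub; [|exact HP2].
    apply (back D k (Comb C)); auto.
    + intros l Hl; apply HP1, Hl.
    + assert (HX : typed D k (Comb C) X).
      { apply typed_bigcap.
        - intros x Hx. apply in_map_iff in Hx as [S [<- HS]].
          destruct (HSs S HS) as [Hw [Hl _]]. constructor; auto.
        - eapply T_sub; [apply (T_var D k C tC []); auto|apply sub_omega].
          + constructor.
          + unfold level_subst; simpl; lia. }
      eapply T_sub; [exact HX|]. apply bigcap_glb. intros p Hp. apply paths_sub, HP1, Hp.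
Qed.
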